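(* Let $n\ge3$, $\ell>0$, $\alpha\ge(n-2)\ell$, $S=\alpha I_n+\ell\mathbf{1}_n\mathbf{1}_n^\top$, and let $P\ne0$ be a real symmetric diagonally dominant $n\times n$ matrix with nonnegative entries. Define $f(t)=\|(S+tP)^{-1}\|_\infty$ for $t\ge0$. Then $f$ is differentiable at $t=0$ (as a one-sided derivative) and $f'(0)<0$.
   Context: For a real matrix $P$, $\Delta_i(P)=|P_{ii}|-\sum_{j\ne i}|P_{ij}|$; $P$ is diagonally dominant if $\Delta_i(P)\ge0$ for all $i$. $\|A\|_\infty$ is the maximum absolute row sum. *)

(* Defs.v *)
From HB Require Import structures.
From mathcomp Require Import all_boot all_order all_algebra.
Set Implicit Arguments. Unset Strict Implicit. Unset Printing Implicit Defensive.
Import Order.TTheory GRing.Theory Num.Theory.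
Local Open Scope ring_scope.

Definition Delta (R : numDomainType) (n : nat) (P : 'M[R]_n) (i : 'I_n) : R :=
  `|P i i| - \sum_(j < n | j != i) `|P i j|.

Definition diag_dominant (R : numDomainType) (n : nat) (P : 'M[R]_n) : Prop :=
  forall i : 'I_n, 0 <= Delta P i.

(* maximum absolute row sum (row sums are >= 0, so 0 is a neutral start) *)
Definition norm_inf (R : realDomainType) (m n : nat) (A : 'M[R]_(m, n)) : R :=
  \big[Num.max/0]_(i < m) \sum_(j < n) `|A i j|.

Definition ones (R : pzRingType) (n : nat) : 'cV[R]_n := const_mx 1.

Definition has_right_deriv0 (R : realFieldType) (f : R -> R) (L : R) : Prop :=
  forall eps : R, 0 < eps -> exists2 delta : R, 0 < delta &
    forall t : R, 0 < t -> t < delta -> `|(f t - f 0) / t - L| < eps.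

(* Main.v *)
Require Import Defs.
From HB Require Import structures.
From mathcomp Require Import all_boot all_order all_algebra.
From mathcomp Require Import ring lra.
Import Order.TTheory GRing.Theory Num.Theory.
Local Open Scope ring_scope.

Section Tot.
Set Implicit Arguments. Unset Strict Implicit.
Variable R : realFieldType.

Definition tot m k (M : 'M[R]_(m, k)) : R := \sum_i \sum_j `|M i j|.

Lemma sum_ge_term (I : finType) (P : pred I) (F : I -> R) i :
  (forall j, P j -> 0 <= F j) -> P i -> F i <= \sum_(j | P j) F j.
Proof. by move=> H Pi; rewrite (bigD1 i) //= lerDl sumr_ge0 // => j /andP[/H]. Qed.

Lemma tot_ge0 m k (M : 'M[R]_(m, k)) : 0 <= tot M.
Proof. by apply: sumr_ge0 => i _; apply: sumr_ge0. Qed.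

Lemma row_le_tot m k (M : 'M[R]_(m, k)) i : \sum_j `|M i j| <= tot M.
Proof. by apply: (sum_ge_term (P := predT)) => // j _; apply: sumr_ge0. Qed.

Lemma entry_le_tot m k (M : 'M[R]_(m, k)) i j : `|M i j| <= tot M.
Proof.
apply: le_trans (row_le_tot M i).
by apply: (sum_ge_term (P := predT) (F := fun j => `|M i j|)).
Qed.

Lemma totD m k (A B : 'M[R]_(m, k)) : tot (A + B) <= tot A + tot B.
Proof.
rewrite /tot -big_split /=; apply: ler_sum => i _.
rewrite -big_split /=; apply: ler_sum => j _; rewrite mxE; exact: ler_normD.
Qed.

Lemma totZ m k a (A : 'M[R]_(m, k)) : tot (a *: A) = `|a| * tot A.
Proof.
rewrite /tot mulr_sumr; apply: eq_bigr => i _; rewrite mulr_sumr.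
by apply: eq_bigr => j _; rewrite mxE normrM.
Qed.

Lemma totN m k (A : 'M[R]_(m, k)) : tot (- A) = tot A.
Proof. by apply: eq_bigr => i _; apply: eq_bigr => j _; rewrite mxE normrN. Qed.

Lemma totM m k p (A : 'M[R]_(m, k)) (B : 'M[R]_(k, p)) :
  tot (A *m B) <= tot A * tot B.
Proof.
rewrite /tot mulr_suml; apply: ler_sum => i _.
apply: (@le_trans _ _ (\sum_j \sum_l `|A i l| * `|B l j|)).
  apply: ler_sum => j _; rewrite mxE; apply: le_trans (ler_norm_sum _ _ _) _.
  by apply: ler_sum => l _; rewrite normrM.
rewrite exchange_big /= mulr_suml; apply: ler_sum => l _.
rewrite -mulr_sumr; apply: ler_wpM2l => //; exact: row_le_tot.
Qed.

Lemma tot_eq0 m k (A : 'M[R]_(m, k)) : tot A <= 0 -> A = 0.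
Proof.
move=> H; apply/matrixP => i j; rewrite mxE; apply/eqP; rewrite -normr_le0.
exact: le_trans (entry_le_tot A i j) H.
Qed.

Lemma row_abs n (v : 'I_n -> R) i : 0 <= v i -> (forall j, j != i -> v j <= 0) ->
  \sum_j `|v j| = 2 * v i - \sum_j v j.
Proof.
move=> vi vj; rewrite (bigD1 i) //= [X in _ = _ - X](bigD1 i) //=.
have -> : \sum_(j | j != i) `|v j| = - \sum_(j | j != i) v j.
  by rewrite -sumrN; apply: eq_bigr => j ji; rewrite ler0_norm ?vj.
rewrite ger0_norm //; ring.
Qed.

Lemma entry3 n (M N K : 'M[R]_n) t i j : (M - N + t *: K) i j = M i j - N i j + t * K i j.
Proof. by rewrite !mxE. Qed.

End Tot.

Theorem proposition5p1 (R : realFieldType) (n : nat) (l alpha : R)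
  (P : 'M[R]_n) :
  (3 <= n)%N -> 0 < l -> (n%:R - 2) * l <= alpha ->
  P != 0 -> P^T = P -> diag_dominant P -> (forall i j, 0 <= P i j) ->
  let S : 'M[R]_n := alpha%:M + l *: (ones R n *m (ones R n)^T) in
  let f : R -> R := fun t => norm_inf (invmx (S + t *: P)) in
  exists2 L : R, has_right_deriv0 f L & L < 0.
Proof.
move=> n3 l0 hal Pn0 Psym dd Pge0 S f.
have n3R : 3 <= n%:R :> R by rewrite (ler_nat R 3).
have a0 : 0 < alpha.
  apply: lt_le_trans hal; apply: mulr_gt0 => //; lra.
pose m := alpha + n%:R * l.
have m0 : 0 < m by rewrite /m; apply: ltr_wpDr => //; apply: mulr_ge0 => //; lra.
pose c := alpha^-1.
pose d := l / (alpha * m).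
pose J : 'M[R]_n := const_mx 1.
have SJ : S = alpha%:M + l *: J.
  rewrite /S; congr (_ + _ *: _); apply/matrixP => i j.
  by rewrite !mxE big_ord1 !mxE mul1r.
pose B := c%:M - d *: J.
have JJ : J *m J = n%:R *: J.
  apply/matrixP => i j; rewrite !mxE (eq_bigr (fun _ => 1)).
    by rewrite sumr_const card_ord mulr1.
  by move=> k _; rewrite !mxE mulr1.
have SB : S *m B = 1%:M.
  rewrite SJ /B mulmxDl !mulmxBr !mul_scalar_mx !mul_mx_scalar scale_scalar_mx.
  rewrite -!scalemxAl -!scalemxAr JJ !scalerA.
  have -> : alpha * c = 1 by rewrite /c mulfV // gt_eqF.
  have -> : l * d * n%:R = l * c - alpha * d.
    rewrite /d /c /m; field; rewrite ?gt_eqF //; apply: mulr_gt0 => //.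
  by rewrite scalerBl; apply/matrixP => i j; rewrite !mxE; ring.
clearbody S.
have Ps : forall i j, P i j = P j i.
  by move=> i j; rewrite -{1}Psym mxE.
pose p k := \sum_j P k j.
pose s := \sum_k p k.
have BPik : forall i k, (B *m P) i k = c * P i k - d * p k.
  move=> i k; rewrite /B mulmxBl mul_scalar_mx -scalemxAl !mxE; congr (_ - d * _).
  rewrite /p; apply: eq_bigr => j _; rewrite mxE mul1r; exact: Ps.
have BPJ : forall i, (B *m P *m J) i i = c * p i - d * s.
  move=> i; rewrite mxE (eq_bigr (fun k => c * P i k - d * p k)); last first.
    by move=> k _; rewrite BPik mxE mulr1.
  by rewrite sumrB -!mulr_sumr.
have BPJ' : forall i j, (B *m P *m J) i j = c * p i - d * s.
  move=> i j; rewrite mxE (eq_bigr (fun k => c * P i k - d * p k)); last first.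
    by move=> k _; rewrite BPik mxE mulr1.
  by rewrite sumrB -!mulr_sumr.
pose D := B *m P *m B.
have Dij : forall i j, D i j = c^+2 * P i j - c * d * (p j + p i) + d^+2 * s.
  move=> i j; rewrite /D {2}/B mulmxBr mul_mx_scalar -scalemxAr.
  rewrite mxE [X in X + _]mxE [X in _ + X]mxE [X in _ - X]mxE BPik BPJ'.
  rewrite /p; ring.
have sD : forall i, \sum_j D i j = c^+2 * p i - c * d * (s + n%:R * p i) + d^+2 * (n%:R * s).
  move=> i; rewrite (eq_bigr _ (fun j _ => Dij i j)) big_split sumrB -!mulr_sumr.
  rewrite big_split /= !sumr_const card_ord -/(p i) -/s.
  rewrite -[s *+ n]mulr_natl -[p i *+ n]mulr_natl /=; ring.
have pD : forall i, p i = P i i + \sum_(j | j != i) P i j.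
  by move=> i; rewrite /p (bigD1 i).
have offle : forall i, \sum_(j | j != i) P i j <= P i i.
  move=> i; have := dd i; rewrite /Delta subr_ge0 ger0_norm //.
  by rewrite (eq_bigr _ (fun j _ => ger0_norm (Pge0 i j))).
have offge : forall i, 0 <= \sum_(j | j != i) P i j.
  by move=> i; apply: sumr_ge0.
have pkge : forall i k, k != i -> 2 * P i k <= p k.
  move=> i k ki; rewrite pD Ps.
  have : P k i <= \sum_(j | j != k) P k j.
    by apply: (sum_ge_term (P := fun j => j != k)) => //; rewrite eq_sym.
  have := offle k; lra.
have sge : forall i, p i + 2 * (p i - P i i) <= s.
  move=> i; rewrite /s (bigD1 i) //= lerD2l pD addrAC subrr add0r mulr_sumr.
  by apply: ler_sum => k ki; apply: pkge.
have s0 : 0 < s.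
  have [[i j] /= Pij] : exists ij : 'I_n * 'I_n, P ij.1 ij.2 != 0.
    case: (pickP (fun ij : 'I_n * 'I_n => P ij.1 ij.2 != 0)) => [ij H|H].
      by exists ij.
    by move: Pn0; rewrite (_ : P = 0) ?eqxx //; apply/matrixP => i j; rewrite mxE; apply/eqP/negbFE/(H (i, j)).
  have Pij0 : 0 < P i j by rewrite lt_def Pij Pge0.
  apply: lt_le_trans Pij0 _; apply: le_trans (sge i).
  have : P i j <= p i by apply: (sum_ge_term (P := predT)).
  have := offle i; have := offge i; rewrite -/(p i) in pD *; have := pD i; lra.
have qpos : forall i, 0 < 2 * D i i - \sum_j D i j.
  move=> i; rewrite sD Dij.
  have h1 := offle i; have h2 := offge i; have h3 := sge i; have h4 := pD i.
  move: h1 h2 h3 h4 => h1 h2 h3 h4.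
  set x := P i i in h1 h3 h4 *; set pi := p i in h3 h4 *.
  set o := \sum_(j | j != i) P i j in h1 h2 h4.
  pose u := s - x - 3 * o; pose v := x - o; pose w := o.
  pose A3 := l * (2 * l + alpha); pose A13 := m * (alpha + (2 * n%:R - 4) * l) + A3.
  pose K := l * ((2 * n%:R - 4) * alpha + 2 * l * (n%:R - 2) ^+ 2).
  have eT : 2 * (c ^+ 2 * x - c * d * (pi + pi) + d ^+ 2 * s) -
    (c ^+ 2 * pi - c * d * (s + n%:R * pi) + d ^+ 2 * (n%:R * s)) =
    (A3 * u + A13 * v + K * w) / (alpha ^+ 2 * m ^+ 2).
    rewrite /u /v /w /A13 /A3 /K /c /d /m; rewrite h4; field.
    by rewrite -/m; apply/andP; split; apply: lt0r_neq0.
  rewrite eT; apply: divr_gt0; last by apply: mulr_gt0; apply: exprn_gt0.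
  have A30 : 0 < A3 by apply: mulr_gt0 => //; lra.
  have A130 : 0 < A13.
    apply: ltr_wpDl => //; apply: mulr_ge0; [exact: ltW|].
    apply: addr_ge0; [exact: ltW|]; apply: mulr_ge0; lra.
  have K0 : 0 < K.
    apply: mulr_gt0 => //.
    have : 0 < (2 * n%:R - 4) * alpha by apply: mulr_gt0 => //; lra.
    have : 0 <= 2 * l * (n%:R - 2) ^+ 2.
      by apply: mulr_ge0; [apply: mulr_ge0; lra|apply: sqr_ge0].
    lra.
  pose k := Num.min A3 (Num.min A13 (K / 4)).
  have k0 : 0 < k by rewrite /k !lt_min A30 A130 divr_gt0.
  have ku : k * u <= A3 * u by apply: ler_wpM2r; [rewrite /u; lra|rewrite /k ge_min lexx].
  have kv : k * v <= A13 * v.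
    by apply: ler_wpM2r; [rewrite /v; lra|rewrite /k !ge_min lexx orbT].
  have kw : k * (4 * w) <= K * w.
    rewrite mulrA; apply: ler_wpM2r; first by rewrite /w.
    rewrite -ler_pdivlMr // /k !ge_min lexx !orbT //.
  have es : s = u + v + 4 * w by rewrite /u /v /w; ring.
  have : 0 < k * s by apply: mulr_gt0.
  rewrite es; clearbody u v w k; rewrite !mulrDr; lra.
pose G1 := P *m B.
pose X t := S + t *: P.
have Xunit : forall t, 0 <= t -> t * tot G1 <= 1/2 -> X t \in unitmx.
  move=> t t0 tG; rewrite -row_free_unit; apply: inj_row_free => u Hu.
  have uS : u *m S = - (t *: (u *m P)).
    by apply/eqP; rewrite -addr_eq0 scalemxAr -mulmxDr; apply/eqP.
  have ue : u = - (t *: (u *m G1)).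
    by rewrite -[LHS]mulmx1 -SB mulmxA uS mulNmx -scalemxAl mulmxA.
  apply: tot_eq0.
  have h : tot u <= t * (tot u * tot G1).
    rewrite {1}ue totN totZ ger0_norm //; apply: ler_wpM2l => //; exact: totM.
  have := tot_ge0 u; have := tot_ge0 G1.
  rewrite mulrA [t * _]mulrC -mulrA in h.
  have : tot u * (t * tot G1) <= tot u * (1/2) by apply: ler_wpM2l => //; exact: tot_ge0.
  lra.
pose Y t := invmx (X t).
have Yeq : forall t, X t \in unitmx -> Y t = B - t *: (Y t *m G1).
  move=> t Xu.
  have YS : Y t *m S = 1%:M - t *: (Y t *m P).
    by rewrite -(mulVmx Xu) /X mulmxDr -scalemxAr addrK.
  by rewrite -[LHS]mulmx1 -SB mulmxA YS mulmxBl mul1mx -scalemxAl mulmxA.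
have totY : forall t, 0 <= t -> t * tot G1 <= 1/2 -> tot (Y t) <= 2 * tot B.
  move=> t t0 tG; have h := Yeq t (Xunit t t0 tG).
  have h1 : tot (Y t) <= tot B + t * (tot (Y t) * tot G1).
    rewrite {1}h; apply: le_trans (totD _ _) _; rewrite totN totZ ger0_norm //.
    by rewrite lerD2l; apply: ler_wpM2l => //; exact: totM.
  have : tot (Y t) * (t * tot G1) <= tot (Y t) * (1/2) by apply: ler_wpM2l => //; exact: tot_ge0.
  rewrite mulrA [t * _]mulrC -mulrA in h1; lra.
pose G2 := P *m B *m P *m B.
have Eeq : forall t, X t \in unitmx ->
    Y t - B + t *: D = t ^+ 2 *: (Y t *m G2).
  move=> t Xu; have h := Yeq t Xu.
  have h2 : Y t *m G1 = D - t *: (Y t *m G2).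
    by rewrite {1}h /G1 mulmxBl -scalemxAl /G2 /D !mulmxA.
  rewrite {1}h h2 scalerBr scalerA -expr2.
  set W := Y t *m G2; apply/matrixP => i j; rewrite !mxE; ring.
pose KE := 2 * tot B * tot G2 + 1.
have KE0 : 0 < KE.
  rewrite /KE; have := mulr_ge0 (mulr_ge0 (ler0n R 2) (tot_ge0 B)) (tot_ge0 G2); lra.
have Ebound : forall t, 0 <= t -> t * tot G1 <= 1/2 ->
    tot (Y t - B + t *: D) <= t ^+ 2 * KE.
  move=> t t0 tG; rewrite Eeq ?Xunit // totZ ger0_norm ?exprn_ge0 //.
  apply: ler_wpM2l; first exact: exprn_ge0.
  apply: le_trans (totM _ _) _; rewrite /KE.
  have := totY t t0 tG; have := tot_ge0 G2; have := tot_ge0 (Y t).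
  move=> a b c0; apply: le_trans (ler_wpM2r b c0) _; lra.
have Bii : forall i, B i i = c - d by move=> i; rewrite !mxE eqxx mulr1.
have Bij : forall i j, j != i -> B i j = - d.
  by move=> i j ji; rewrite !mxE eq_sym (negbTE ji) mulr1 sub0r.
have sB : forall i, \sum_j B i j = c - n%:R * d.
  move=> i; rewrite (bigD1 i) //= Bii (eq_bigr (fun _ => - d)); last by move=> j ji; rewrite Bij.
  rewrite sumr_const -[_ *+ _]mulr_natl.
  have -> : #|[pred j | j != i]| = n.-1.
    by rewrite cardC1 card_ord.
  have hn : n%:R = n.-1%:R + 1 :> R.
    by rewrite natr1 prednK // (leq_trans _ n3).
  rewrite hn; ring.
pose q i := 2 * D i i - \sum_j D i j.
pose r0 := 2 * (c - d) - (c - n%:R * d).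
pose mu := Num.min d (c - d).
have d0 : 0 < d by rewrite /d divr_gt0 // mulr_gt0.
have cd0 : 0 < c - d.
  have -> : c - d = (alpha + (n%:R - 1) * l) / (alpha * m).
    by rewrite /c /d /m; field; apply/andP; split; apply: lt0r_neq0.
  apply: divr_gt0; last exact: mulr_gt0.
  have : 0 < (n%:R - 1) * l by apply: mulr_gt0 => //; lra.
  lra.
have mu0 : 0 < mu by rewrite /mu lt_min d0 cd0.
pose tD := tot D.
have rowapprox : forall t, 0 <= t -> t <= 1 -> t * tot G1 <= 1/2 -> t * (tD + KE) < mu ->
    forall i, `| \sum_j `|Y t i j| - (r0 - t * q i) | <= 3 * (t ^+ 2 * KE).
  move=> t t0 t1 tG tmu i.
  have Eb := Ebound t t0 tG.
  move: Eb; set E := Y t - B + t *: D => Eb.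
  have Yij : forall j, Y t i j = B i j - t * D i j + E i j.
    by move=> j; rewrite /E entry3; ring.
  have small : forall j, `|E i j - t * D i j| < mu.
    move=> j; apply: le_lt_trans tmu; apply: le_trans (ler_normB _ _) _.
    rewrite normrM ger0_norm // mulrDr.
    have := entry_le_tot E i j; have := entry_le_tot D i j.
    rewrite -/tD => h1 h2.
    have : t * `|D i j| <= t * tD by apply: ler_wpM2l.
    have : t ^+ 2 * KE <= t * KE.
      by apply: ler_wpM2r; [exact: ltW|rewrite expr2; have := ler_wpM2l t0 t1; rewrite mulr1].
    lra.
  have mud : mu <= d by rewrite /mu ge_min lexx.
  have mucd : mu <= c - d by rewrite /mu ge_min lexx orbT.
  rewrite (row_abs (v := fun j => Y t i j) (i := i)); last first.
  - move=> j ji; rewrite Yij Bij //; have := small j; rewrite ltr_norml; lra.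
  - rewrite Yij Bii; have := small i; rewrite ltr_norml; lra.
  rewrite (eq_bigr _ (fun j _ => Yij j)) big_split sumrB /= -mulr_sumr sB Yij Bii.
  rewrite /q /r0.
  have -> : 2 * (c - d - t * D i i + E i i) -
    (c - n%:R * d - t * \sum_j D i j + \sum_j E i j) -
    (2 * (c - d) - (c - n%:R * d) - t * (2 * D i i - \sum_j D i j)) =
    2 * E i i - \sum_j E i j by ring.
  apply: le_trans (ler_normB _ _) _.
  have := entry_le_tot E i i; have := row_le_tot E i.
  have : `|\sum_j E i j| <= \sum_j `|E i j| by apply: ler_norm_sum.
  rewrite normrM (ger0_norm (ler0n R 2)); lra.
have n0 : (0 < n)%N by apply: leq_trans n3.
pose i0 : 'I_n := Ordinal n0.
have [im _ qmin] := @arg_minP _ _ _ i0 (fun _ => true) q isT.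
exists (- q im); last by rewrite oppr_lt0 qpos.
have fE : forall t, f t = \big[Num.max/0]_i \sum_j `|Y t i j| by [].
pose r t i := \sum_j `|Y t i j|.
have r0i : forall i, r 0 i = r0.
  move=> i; have := rowapprox 0 (lexx 0) ler01.
  rewrite mul0r (_ : 0 <= 1/2) ?divr_ge0 // mul0r mu0 => /(_ isT isT i).
  by rewrite mul0r subr0 expr2 !mul0r mulr0 normr_le0 subr_eq0 => /eqP.
have r00 : 0 <= r0 by rewrite -(r0i i0); apply: sumr_ge0.
have f0 : f 0 = r0.
  rewrite fE; apply/le_anti/andP; split.
    by apply: bigmax_le => // i _; rewrite -/(r 0 i) r0i.
  by rewrite -{1}(r0i i0); apply: le_bigmax.
move=> eps eps0.
have G10 : 0 < tot G1 + 1 by have := tot_ge0 G1; lra.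
have tDK : 0 < tD + KE by have := tot_ge0 D; rewrite -/tD; lra.
pose delta := Num.min 1 (Num.min (1 / (2 * (tot G1 + 1)))
                 (Num.min (mu / (tD + KE)) (eps / (3 * KE)))).
exists delta.
  rewrite /delta !lt_min ltr01 !divr_gt0 //; apply: mulr_gt0 => //; lra.
move=> t t0 tdelta.
move: tdelta; rewrite /delta !lt_min => /andP[t1 /andP[tG /andP[tmu teps]]].
have t1' : t <= 1 by exact: ltW.
have tG' : t * tot G1 <= 1/2.
  rewrite ltr_pdivlMr ?mulr_gt0 // in tG.
  have := tot_ge0 G1; nra.
have tmu' : t * (tD + KE) < mu by rewrite ltr_pdivlMr // in tmu.
have ra := rowapprox t (ltW t0) t1' tG' tmu'.
have up : f t <= r0 - t * q im + 3 * (t ^+ 2 * KE).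
  rewrite fE; apply: bigmax_le.
    have := ra im; have : 0 <= r t im by apply: sumr_ge0.
    rewrite -/(r t im) ler_norml; lra.
  move=> i _; have := ra i; have := qmin i isT.
  have : t * q im <= t * q i by apply: ler_wpM2l; [exact: ltW|exact: qmin].
  rewrite -/(r t i) ler_norml; lra.
have lo : r0 - t * q im - 3 * (t ^+ 2 * KE) <= f t.
  rewrite fE; apply: (@le_trans _ _ (r t im)); last by apply: le_bigmax.
  have := ra im; rewrite -/(r t im) ler_norml; lra.
rewrite f0.
have -> : (f t - r0) / t - - q im = (f t - (r0 - t * q im)) / t.
  by field; exact: lt0r_neq0.
rewrite normrM [`|t^-1|]gtr0_norm ?invr_gt0 // ltr_pdivrMr //.
apply: (@le_lt_trans _ _ (3 * (t ^+ 2 * KE))).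
  rewrite ler_norml; lra.
rewrite ltr_pdivlMr ?mulr_gt0 // in teps.
have h : t * (3 * KE) * t < eps * t by rewrite ltr_pM2r.
have -> : 3 * (t ^+ 2 * KE) = t * (3 * KE) * t by ring.
exact: h.
Qed.
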